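(* Let $M$ be the allocation output by the online greedy algorithm on an instance of Model 1 and let $N$ be an optimal offline allocation. For a day $d_i$, let $X_i$ be the set of Type 2 agents that $N$ allocates on day $d_i$ and $Y_i$ the set of agents that $M$ allocates on day $d_i$. Then there exists an injective map $f:X_i\to Y_i$ such that whenever $f(a_p)=a_q$, we have $\alpha_p\le\alpha_q$.
   Context: Model 1: finite sets of agents $A$, categories $C$ and days $D=\{d_1,\dots,d_T\}$; each agent is eligible for a subset of categories; daily supply $s_i$ for day $d_i$; daily quota $q_{ik}$ for category $c_k$ on day $d_i$; each agent $a_j$ has a priority factor $\alpha_j>0$ and a set of available days; discount factor $\delta\in(0,1)$. An allocation maps each agent to a pair (eligible category, available day) or to $\emptyset$, with at most $q_{ik}$ agents getting $(c_k,d_i)$ and at most $s_i$ agents getting day $d_i$; agent $a_j$ allocated on day $d_i$ has utility $\alpha_j\delta^{i-1}$, and an optimal offline allocation maximizes total utility. The online greedy algorithm: on each day $d_i$, let $A_i$ be the agents available on $d_i$ not yet allocated; form the bipartite graph between $A_i$ and $C$ with an edge $(a_j,c_k)$ when $a_j$ is eligible for $c_k$, of weight $\alpha_j\delta^{i-1}$, agents of capacity $1$ and $c_k$ of capacity $q_{ik}$; compute a maximum-weight $b$-matching of size at most $s_i$ and allocate accordingly on day $d_i$. An agent allocated by $N$ is of Type 1 if $M$ allocates it on a strictly earlier day than $N$ does; every other agent allocated by $N$ is of Type 2. *)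

(* Defs.v *)
From HB Require Import structures.
From mathcomp Require Import all_boot all_order all_algebra.
Set Implicit Arguments. Unset Strict Implicit. Unset Printing Implicit Defensive.
Import Order.TTheory GRing.Theory Num.Theory.
Local Open Scope ring_scope.

(* Model 1.  Days d_1..d_T are indexed by i : 'I_T (i = 0 is d_1), so an agent
   a_j allocated on day i gets utility alpha_j * delta^i (= alpha_j delta^{(i+1)-1}). *)
Section Model1.
Variables (R : realFieldType) (A C : finType) (T : nat).
Variable elig : A -> C -> bool.
Variable s : 'I_T -> nat.
Variable q : 'I_T -> C -> nat.
Variable avail : A -> 'I_T -> bool.
Variable alpha : A -> R.
Variable delta : R.

Definition allocation := {ffun A -> option (C * 'I_T)}.

Definition allocated_on (M : allocation) (a : A) (i : 'I_T) : bool :=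
  if M a is Some (_, d) then d == i else false.

Definition feasible (M : allocation) : Prop :=
  (forall a c d, M a = Some (c, d) -> elig a c && avail a d) /\
  (forall i c, #|[set a | M a == Some (c, i)]| <= q i c)%N /\
  (forall i, #|[set a | allocated_on M a i]| <= s i)%N.

Definition utility (M : allocation) : R :=
  \sum_(a : A) (if M a is Some (_, d) then alpha a * delta ^+ d else 0).

Definition optimal (N : allocation) : Prop :=
  feasible N /\ forall N' : allocation, feasible N' -> utility N' <= utility N.

Definition allocated_before (M : allocation) (a : A) (i : 'I_T) : bool :=
  [exists j : 'I_T, (j < i)%N && allocated_on M a j].

Definition remaining (M : allocation) (i : 'I_T) (a : A) : bool :=
  avail a i && ~~ allocated_before M a i.

(* A b-matching on day i between A_i and C, encoded as a partial map
   agents -> categories: agent capacity 1, category c capacity q i c,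
   total size at most s i, edges only for eligible pairs. *)
Definition day_feasible (M : allocation) (i : 'I_T) (g : A -> option C) : Prop :=
  (forall a c, g a = Some c -> remaining M i a && elig a c) /\
  (forall c, #|[set a | g a == Some c]| <= q i c)%N /\
  (#|[set a | g a != None]| <= s i)%N.

Definition day_weight (i : 'I_T) (g : A -> option C) : R :=
  \sum_(a : A) (if g a is Some _ then alpha a * delta ^+ i else 0).

Definition restrict (M : allocation) (i : 'I_T) (a : A) : option C :=
  if M a is Some (c, d) then (if d == i then Some c else None) else None.

(* M is an output of the online greedy algorithm: on every day i, the
   agents M allocates on day i form a maximum-weight b-matching of size at
   most s i among the remaining agents A_i. *)
Definition greedy_output (M : allocation) : Prop :=
  forall i : 'I_T,
    day_feasible M i (restrict M i) /\
    forall g : A -> option C, day_feasible M i g ->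
      day_weight i g <= day_weight i (restrict M i).

(* X_i: Type 2 agents that N allocates on day i (N allocates them on day i and
   M does not allocate them on a strictly earlier day). *)
Definition type2_on (M N : allocation) (i : 'I_T) : {set A} :=
  [set a | allocated_on N a i && ~~ allocated_before M a i].

Definition alloc_on (M : allocation) (i : 'I_T) : {set A} :=
  [set a | allocated_on M a i].

End Model1.

(* Main.v *)
Require Import Defs.
From HB Require Import structures.
From mathcomp Require Import all_boot all_order all_algebra.
From mathcomp Require Import zify.
Import Order.TTheory GRing.Theory Num.Theory.
Local Open Scope ring_scope.

Section Aux.
Variables (R : realFieldType) (A C : finType) (T : nat)
  (elig : A -> C -> bool) (s : 'I_T -> nat) (q : 'I_T -> C -> nat)
  (avail : A -> 'I_T -> bool) (M : allocation A C T) (i : 'I_T).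

Local Notation DF := (day_feasible elig s q avail M i).

Definition supp (g : A -> option C) : {set A} := [set a | g a != None].
Definition dis (g2 g : A -> option C) : {set A} :=
  [set a | (g a != None) && (g a != g2 a)].

Lemma restrP_feasible (P : pred A) g : DF g -> DF (fun a => if P a then g a else None).
Proof.
case=> [H1 [H2 H3]]; split; [|split].
- move=> a c; case: (P a) => //; exact: H1.
- move=> c; apply: (leq_trans _ (H2 c)); apply: subset_leq_card; apply/subsetP => a.
  by rewrite !inE; case: (P a).
- apply: (leq_trans _ H3); apply: subset_leq_card; apply/subsetP => a.
  by rewrite !inE; case: (P a).
Qed.

Lemma card_set_sum (P : pred A) : #|[set a | P a]| = (\sum_a (P a : nat))%N.
Proof.
rewrite -sum1_card big_mkcond /=; apply: eq_bigr => a _; rewrite inE; by case: (P a).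
Qed.

Lemma card_supp_sum g : #|supp g| = (\sum_c #|[set a | g a == Some c]|)%N.
Proof.
rewrite card_set_sum.
under [RHS]eq_bigr => c _ do rewrite card_set_sum.
rewrite exchange_big /=; apply: eq_bigr => a _.
case: (g a) => [c0|] /=.
- rewrite (bigD1 c0) //= eqxx big1 // => c /negbTE Hc.
  by rewrite (inj_eq (@Some_inj _)) eq_sym Hc.
- by rewrite big1.
Qed.

Lemma step g1 g2 : DF g1 -> DF g2 -> (#|supp g1| < #|supp g2|)%N ->
  exists g, DF g /\ supp g1 \subset supp g /\ supp g \subset supp g1 :|: supp g2 /\
   ((#|supp g1| < #|supp g|)%N \/ (supp g = supp g1 /\ (#|dis g2 g| < #|dis g2 g1|)%N)).
Proof.
move=> [E1 [Q1 S1]] [E2 [Q2 S2]] Hlt.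
have [c Hc] : exists c, (#|[set a | g1 a == Some c]| < #|[set a | g2 a == Some c]|)%N.
  apply/existsP; apply: contraT; rewrite negb_exists => /forallP H.
  have Hle : (\sum_c #|[set a | g2 a == Some c]| <= \sum_c #|[set a | g1 a == Some c]|)%N.
    by apply: leq_sum => c _; rewrite leqNgt H.
  move: Hlt; rewrite !card_supp_sum; lia.
have [j Hj2 Hj1] : exists2 j, g2 j = Some c & g1 j != Some c.
  case: (boolP [exists j, (g2 j == Some c) && (g1 j != Some c)]).
    by move=> /existsP [j /andP [/eqP ? ?]]; exists j.
  move=> H; exfalso.
  have : [set a | g2 a == Some c] \subset [set a | g1 a == Some c].
    apply/subsetP => a; rewrite !inE => Ha.
    by move: H; rewrite negb_exists => /forallP /(_ a); rewrite Ha /= negbK.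
  by move/subset_leq_card; rewrite leqNgt Hc.
pose g := fun a => if a == j then Some c else g1 a.
have Hsub1 : supp g1 \subset supp g.
  apply/subsetP => a; rewrite !inE /g; by case: (a == j).
have Hsubj : supp g \subset j |: supp g1.
  apply/subsetP => a; rewrite !inE /g; case: (a == j) => //.
exists g; split; [split; [|split]|split; [|split]].
- move=> a c'; rewrite /g; case: (eqVneq a j) => [-> [<-]|_]; [exact: E2 Hj2 | exact: E1].
- move=> c'; case: (eqVneq c' c) => [->|ne].
    have : [set a | g a == Some c] \subset j |: [set a | g1 a == Some c].
      apply/subsetP => a; rewrite !inE /g; case: (a == j) => //.
    move/subset_leq_card => H; apply: (leq_trans _ (Q2 c)); apply: leq_trans H _.
    rewrite cardsU1; have := leq_b1 (j \notin [set a | g1 a == Some c]); lia.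
  apply: (leq_trans _ (Q1 c')); apply: subset_leq_card; apply/subsetP => a.
  rewrite !inE /g; case: (a == j) => //.
  by rewrite (inj_eq (@Some_inj _)) eq_sym (negbTE ne).
- apply: (leq_trans _ S2); apply: leq_trans (subset_leq_card Hsubj) _.
  rewrite cardsU1; have := leq_b1 (j \notin supp g1); move: Hlt; rewrite /supp; lia.
- exact: Hsub1.
- apply/subsetP => a; rewrite !inE /g; case: (eqVneq a j) => [->|ne]; [by rewrite Hj2 orbT | by move=> ->].
case: (eqVneq (g1 j) None) => Hn.
  left; apply: proper_card; apply/properP; split => //.
  exists j; by rewrite !inE /g ?eqxx ?Hn.
right; split.
  apply/setP => a; rewrite !inE /g; case: (eqVneq a j) => [->|//].
  by rewrite Hn.
apply: proper_card; apply/properP; split.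
  apply/subsetP => a; rewrite !inE /g; case: (eqVneq a j) => [->|//].
  by rewrite Hj2 eqxx andbF.
exists j; first by rewrite !inE Hn Hj2.
by rewrite !inE /g eqxx Hj2 eqxx andbF.
Qed.

Lemma extend g2 : DF g2 -> forall k g1, DF g1 ->
  ((#|supp g2| - #|supp g1|) * #|A|.+1 + #|dis g2 g1| < k)%N ->
  exists g, DF g /\ supp g1 \subset supp g /\ supp g \subset supp g1 :|: supp g2 /\
    (#|supp g2| <= #|supp g|)%N.
Proof.
move=> H2; elim=> [//|k IHk] g1 H1 Hk.
case: (leqP #|supp g2| #|supp g1|) => Hle.
  by exists g1; split => //; split => //; split => //; apply: subsetUl.
have [g [Hg [Sa [Sb [Hc | [Heq Hd]]]]]] := step _ _ H1 H2 Hle.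
  have Hdis : (#|dis g2 g| <= #|A|)%N by apply: max_card.
  have Hsg : (#|supp g| <= #|supp g2| + #|supp g1|)%N.
    apply: leq_trans (subset_leq_card Sb) _; rewrite cardsU; lia.
  have [g' [Hg' [Sa' [Sb' Hc']]]] := IHk g Hg ltac:(nia).
  exists g'; split => //; split; first exact: subset_trans Sa Sa'.
  split => //; apply: subset_trans Sb' _.
  apply/subsetP => a; rewrite inE => /orP [Ha|Ha]; last by rewrite inE Ha orbT.
  by move/subsetP: Sb => /(_ a Ha).
have [g' [Hg' [Sa' [Sb' Hc']]]] := IHk g Hg ltac:(rewrite Heq; lia).
exists g'; split => //; rewrite -Heq; split => //.
Qed.

End Aux.
Arguments supp {A C} g.
Arguments dis {A C} g2 g.

Section Aux2.
Variables (R : realFieldType) (A : finType).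

Lemma sum_lt (w : A -> R) (hw : forall a, 0 < w a) (S Y : {set A}) x t :
  x \in S -> x \notin Y -> S \subset x |: Y ->
  (forall y, y \in Y -> t <= w y -> y \in S) -> t <= w x -> (#|Y| <= #|S|)%N ->
  \sum_(a in Y) w a < \sum_(a in S) w a.
Proof.
move=> xS xY SY HY tx cYS.
have ZY : S :\ x \subset Y.
  apply/subsetP => a; rewrite !inE => /andP [ax aS].
  by move/subsetP: SY => /(_ a aS); rewrite !inE (negbTE ax).
rewrite (big_setD1 x xS) /= (big_setID (S :\ x)) /= (setIidPr ZY).
rewrite [w x + _]addrC ltrD2l.
have cZ : #|S| = #|S :\ x|.+1 by rewrite (cardsD1 x S) xS.
have cY := cardsID (S :\ x) Y; rewrite (setIidPr ZY) in cY.
have : #|Y :\: (S :\ x)| = 0%N \/ #|Y :\: (S :\ x)| = 1%N by lia.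
case => [/eqP|/eqP/cards1P [y Hy]].
  by rewrite cards_eq0 => /eqP ->; rewrite big_set0; exact: hw.
rewrite Hy big_set1.
have : y \in Y :\: (S :\ x) by rewrite Hy set11.
rewrite in_setD => /andP [yZ yY].
apply: lt_le_trans tx; rewrite ltNge; apply/negP => ty.
have yS := HY y yY ty.
move: yZ; rewrite in_setD1 yS andbT negbK => /eqP yx.
by move: xY; rewrite -yx yY.
Qed.

Lemma dw_eq (C : finType) T (alpha : A -> R) delta (i : 'I_T) (g : A -> option C) :
  day_weight alpha delta i g = (\sum_(a in supp g) alpha a) * delta ^+ i.
Proof.
rewrite /day_weight mulr_suml [RHS]big_mkcond /=; apply: eq_bigr => a _; rewrite inE.
by case: (g a) => [c|] /=; rewrite ?mul0r.
Qed.

Lemma exmax (w : A -> R) (X : {set A}) x0 : x0 \in X ->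
  exists2 x, x \in X & forall a, a \in X -> w a <= w x.
Proof.
have H : forall (s : seq A) b, exists2 x, x \in b :: s & forall a, a \in b :: s -> w a <= w x.
  elim=> [|c s IH] b.
    by exists b; [rewrite mem_seq1 | move=> a; rewrite mem_seq1 => /eqP ->].
  have [x xin Hx] := IH c.
  case: (leP (w b) (w x)) => Hbx.
    exists x; first by rewrite inE xin orbT.
    by move=> a; rewrite inE => /orP [/eqP -> //|]; apply: Hx.
  exists b; first by rewrite inE eqxx.
  move=> a; rewrite inE => /orP [/eqP -> //|/Hx ax].
  exact: le_trans ax (ltW Hbx).
move=> x0X; case E: (enum X) => [|b s].
  by move: x0X; rewrite -mem_enum E.
have [x xin Hx] := H s b.
exists x; first by rewrite -mem_enum E.
by move=> a; rewrite -mem_enum E; apply: Hx.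
Qed.

Lemma inj_thr (w : A -> R) : forall n (X Y : {set A}), #|X| = n ->
  (forall t : R, (#|[set a in X | (t <= w a)%R]| <= #|[set a in Y | (t <= w a)%R]|)%N) ->
  exists f : A -> A, {in X &, injective f} /\
    (forall a, a \in X -> f a \in Y /\ w a <= w (f a)).
Proof.
elim=> [|n IH] X Y HX H.
  move/eqP: HX; rewrite cards_eq0 => /eqP ->.
  by exists id; split; [move=> a b; rewrite inE | move=> a; rewrite inE].
have [x0 x0X] : exists x0, x0 \in X.
  by apply/set0Pn; rewrite -card_gt0 HX.
have [x xX Hx] := exmax w _ _ x0X.
have [y0 y0Y] : exists y0, y0 \in [set a in Y | w x <= w a].
  apply/set0Pn; rewrite -card_gt0; apply: leq_trans (H (w x)).
  by rewrite card_gt0; apply/set0Pn; exists x; rewrite inE xX lexx.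
move: y0Y; rewrite inE => /andP [y0Y xy0].
have [y yY Hy] := exmax w _ _ y0Y.
have xy : w x <= w y := le_trans xy0 (Hy _ y0Y).
have HX' : #|X :\ x| = n by move: HX; rewrite (cardsD1 x X) xX; case.
have Ht : forall t : R, (#|[set a in X :\ x | (t <= w a)%R]| <= #|[set a in Y :\ y | (t <= w a)%R]|)%N.
  move=> t; case: (leP t (w x)) => tx.
    have e1 : [set a in X :\ x | t <= w a] = [set a in X | t <= w a] :\ x.
      by apply/setP => a; rewrite !inE andbA.
    have e2 : [set a in Y :\ y | t <= w a] = [set a in Y | t <= w a] :\ y.
      by apply/setP => a; rewrite !inE andbA.
    rewrite e1 e2.
    have := cardsD1 x [set a in X | t <= w a]; rewrite inE xX tx /=.
    have := cardsD1 y [set a in Y | t <= w a]; rewrite inE yY (le_trans tx xy) /=.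
    have := H t; lia.
  rewrite (_ : [set a in X :\ x | t <= w a] = set0) ?cards0 //.
  apply/setP => a; rewrite !inE; apply/negP => /andP [/andP [_ aX] ta].
  have := le_lt_trans (le_trans ta (Hx a aX)) tx; by rewrite ltxx.
have [f' [If' Pf']] := IH (X :\ x) (Y :\ y) HX' Ht.
exists (fun a => if a == x then y else f' a); split.
  move=> a b aX bX /=.
  case: (eqVneq a x) => [->|ax]; case: (eqVneq b x) => [->|bx] //.
  - move=> Ey; have [fb _] := Pf' b ltac:(by rewrite in_setD1 bx bX).
    by move: fb; rewrite -Ey in_setD1 eqxx.
  - move=> Ey; have [fa _] := Pf' a ltac:(by rewrite in_setD1 ax aX).
    by move: fa; rewrite Ey in_setD1 eqxx.
  - by apply: If'; rewrite in_setD1 ?ax ?bx ?aX ?bX.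
move=> a aX /=; case: (eqVneq a x) => [->|ax]; first by split.
have [H1 H2] := Pf' a ltac:(by rewrite in_setD1 ax aX).
by split => //; move: H1; rewrite in_setD1 => /andP [].
Qed.

End Aux2.

Lemma threshold (R : realFieldType) (A C : finType) (T : nat)
  (elig : A -> C -> bool) (s : 'I_T -> nat) (q : 'I_T -> C -> nat)
  (avail : A -> 'I_T -> bool) (alpha : A -> R) (delta : R)
  (halpha : forall a, 0 < alpha a) (hdelta0 : 0 < delta)
  (M N : allocation A C T)
  (hM : greedy_output elig s q avail alpha delta M)
  (hN : optimal elig s q avail alpha delta N)
  (i : 'I_T) (t : R) :
  (#|[set a in type2_on M N i | (t <= alpha a)%R]| <=
   #|[set a in alloc_on M i | (t <= alpha a)%R]|)%N.
Proof.
have [DFM maxM] := hM i.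
pose gN := fun a => if ~~ allocated_before M a i then restrict N i a else None.
have DFN : day_feasible elig s q avail M i gN.
  case: hN => [[NE [NQ NS]] _]; split; [|split].
  - move=> a c; rewrite /gN /remaining /restrict.
    case: (allocated_before M a i) => //=.
    case E: (N a) => [[c' d]|] //.
    case: (eqVneq d i) => [Ed|] // [Ec]; subst d c'.
    by move: (NE _ _ _ E) => /andP [-> ->].
  - move=> c; apply: (leq_trans _ (NQ i c)); apply: subset_leq_card.
    apply/subsetP => a; rewrite !inE /gN /restrict.
    case: (allocated_before M a i) => //=.
    case: (N a) => [[c' d]|] //.
    case: (eqVneq d i) => [->|] //; by move/eqP => [->].
  - apply: (leq_trans _ (NS i)); apply: subset_leq_card.
    apply/subsetP => a; rewrite !inE /gN /restrict /allocated_on.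
    case: (allocated_before M a i) => //=.
    case: (N a) => [[c' d]|] //.
    by case: (d == i).
pose gX := fun a => if (t <= alpha a)%R then gN a else None.
pose gY := fun a => if (t <= alpha a)%R then restrict M i a else None.
have DFX := @restrP_feasible _ _ _ elig s q avail M i (fun a => (t <= alpha a)%R) gN DFN.
have DFY := @restrP_feasible _ _ _ elig s q avail M i (fun a => (t <= alpha a)%R) _ DFM.
have eX : [set a in type2_on M N i | (t <= alpha a)%R] = supp gX.
  apply/setP => a; rewrite !inE /gX /gN /restrict /allocated_on.
  case: (N a) => [[c d]|]; [case: (d == i)|];
  case: (t <= alpha a); case: (allocated_before M a i) => //.
have eY : [set a in alloc_on M i | (t <= alpha a)%R] = supp gY.
  apply/setP => a; rewrite !inE /gY /restrict /allocated_on.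
  case: (M a) => [[c d]|]; [case: (d == i)|];
  case: (t <= alpha a) => //.
rewrite eX eY leqNgt; apply/negP => Hlt.
have [g3 [DF3 [Sa [Sb C3]]]] :=
  @extend _ _ _ elig s q avail M i gX DFX _ gY DFY (ltnSn _).
have [x x3 xY] : exists2 x, x \in supp g3 & x \notin supp gY.
  have : supp gY \proper supp g3.
    by rewrite properEcard Sa /=; apply: leq_trans Hlt C3.
  by case/properP => _ [x ? ?]; exists x.
have xX : x \in supp gX.
  by move/subsetP: Sb => /(_ x x3); rewrite in_setU (negbTE xY).
have tx : (t <= alpha x)%R.
  by move: xX; rewrite inE /gX; case: (t <= alpha x).
have xM : x \notin supp (restrict M i).
  by move: xY; rewrite !inE /gY tx.
have DF4 := @restrP_feasible _ _ _ elig s q avail M i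
  (fun a => (a \in supp gY) || (a == x)) g3 DF3.
set g4 := (fun a => if _ then g3 a else None) in DF4.
have [g5 [DF5 [S5a [S5b C5]]]] :=
  @extend _ _ _ elig s q avail M i (restrict M i) DFM _ g4 DF4 (ltnSn _).
have x5 : x \in supp g5.
  apply: (subsetP S5a); move: x3; rewrite !inE /g4 eqxx orbT //.
have Hlt2 := @sum_lt R A alpha halpha (supp g5) (supp (restrict M i)) x t x5 xM.
have := maxM g5 DF5; rewrite !dw_eq ler_pM2r ?exprn_gt0 // leNgt.
move/negP; apply; apply: Hlt2 => //.
- apply/subsetP => a a5; have := subsetP S5b a a5.
  rewrite in_setU => /orP [a4|aM]; last by rewrite in_setU1 aM orbT.
  move: a4; rewrite inE /g4; case: (boolP (a \in supp gY)) => [aY _|_ /=].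
    rewrite in_setU1; apply/orP; right; move: aY; rewrite !inE /gY.
    by case: (t <= alpha a).
  by case: (eqVneq a x) => [-> _|_ //=]; rewrite in_setU1 eqxx.
- move=> y yM ty; apply: (subsetP S5a).
  have yY : y \in supp gY by move: yM; rewrite !inE /gY ty.
  rewrite inE /g4 yY /=; move/subsetP: Sa => /(_ y yY); by rewrite inE.
Qed.

Theorem lemma3 (R : realFieldType) (A C : finType) (T : nat)
  (elig : A -> C -> bool) (s : 'I_T -> nat) (q : 'I_T -> C -> nat)
  (avail : A -> 'I_T -> bool) (alpha : A -> R) (delta : R)
  (halpha : forall a, 0 < alpha a) (hdelta0 : 0 < delta) (hdelta1 : delta < 1)
  (M N : allocation A C T)
  (hM : greedy_output elig s q avail alpha delta M)
  (hN : optimal elig s q avail alpha delta N)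
  (i : 'I_T) :
  exists f : A -> A,
    {in type2_on M N i &, injective f} /\
    (forall a, a \in type2_on M N i ->
       f a \in alloc_on M i /\ alpha a <= alpha (f a)).
Proof.
apply: (@inj_thr R A alpha _ (type2_on M N i) (alloc_on M i) erefl) => t.
exact: (@threshold R A C T elig s q avail alpha delta halpha hdelta0 M N hM hN i t).
Qed.
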